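(* Let $k\geq 1$ and let $\zeta_1,\dots,\zeta_k\in(0,1)$ be real numbers such that $1,\zeta_1,\dots,\zeta_k$ are linearly independent over $\mathbb{Q}$. With the sequences $b_n^{(s)}$, $b_n^{\prime(s)}$ defined in the context, $$\widehat{\omega}\geq\max\left\{\sup_{s\ge2}\liminf_{n\to\infty}\max_{1\le j\le n}\frac{b^{(s)}_{j+1}-b^{(s)}_j-1}{b^{(s)}_{n+1}},\ \sup_{s\ge2}\liminf_{n\to\infty}\max_{1\le j\le n}\frac{b^{\prime(s)}_{j+1}-b^{\prime(s)}_j-1}{b^{\prime(s)}_{n+1}}\right\}.$$
   Context: For $X>0$ let $\omega_1(X)$ be the supremum of all real $\nu$ such that $|x|\leq X$, $|\zeta_i x-y_i|\leq X^{-\nu}$ ($1\le i\le k$) has a nonzero solution $(x,y_1,\dots,y_k)\in\mathbb{Z}^{k+1}$; $\widehat\omega=\liminf_{X\to\infty}\omega_1(X)$. For an integer $s\ge2$, let $a_1^{i,(s)}<a_2^{i,(s)}<\cdots$ be the positions (after the point) of the nonzero digits in the base-$s$ expansion of $\zeta_i$, and $a_1^{\prime i,(s)}<a_2^{\prime i,(s)}<\cdots$ those of $1-\zeta_i$. Let $(b_n^{(s)})_{n\ge1}$ be the increasing enumeration of $\{a_n^{i,(s)}:1\le i\le k, n\ge1\}$ and $(b_n^{\prime(s)})_{n\ge1}$ the increasing enumeration of $\{a_n^{\prime i,(s)}:1\le i\le k,n\ge1\}$. *)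

(* Defs.v *)
From HB Require Import structures.
From mathcomp Require Import all_boot all_order all_algebra.
From mathcomp Require Import all_classical all_reals all_analysis.
Set Implicit Arguments. Unset Strict Implicit. Unset Printing Implicit Defensive.
Import Order.TTheory GRing.Theory Num.Theory.
Local Open Scope classical_set_scope.
Local Open Scope ring_scope.

Section Defs.
Variable R : realType.

Definition Q_lin_indep (k : nat) (zeta : 'I_k -> R) : Prop :=
  forall (c0 : rat) (c : 'I_k -> rat),
    ratr c0 + \sum_(i < k) ratr (c i) * zeta i = 0 ->
    c0 = 0 /\ forall i, c i = 0.

Definition admissible_nu (k : nat) (zeta : 'I_k -> R) (X : R) : set R :=
  [set nu | exists (x : int) (y : 'I_k -> int),
     ((x != 0) \/ exists i, y i != 0) /\
     `|x%:~R| <= X /\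
     forall i, `| zeta i * x%:~R - (y i)%:~R | <= X `^ (- nu)].

Definition omega1 (k : nat) (zeta : 'I_k -> R) (X : R) : \bar R :=
  ereal_sup [set nu%:E | nu in admissible_nu zeta X].

Definition omega_hat (k : nat) (zeta : 'I_k -> R) : \bar R :=
  limf_einf (omega1 zeta : R^o -> \bar R) (pinfty_nbhs R).

(* n-th digit (n >= 1) after the point of the base-s expansion of z *)
Definition digit (s : nat) (z : R) (n : nat) : int :=
  Num.floor (z * s%:R ^+ n) - s%:Z * Num.floor (z * s%:R ^+ n.-1).

Definition nonzero_positions (k : nat) (zeta : 'I_k -> R) (s : nat) : set nat :=
  [set n | (1 <= n)%N /\ exists i : 'I_k, digit s (zeta i) n != 0].

Definition increasing_enum (P : set nat) (b : nat -> nat) : Prop :=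
  (forall n, (1 <= n)%N -> (b n < b n.+1)%N) /\
  [set b n | n in [set n | (1 <= n)%N]] = P.

Definition gap_ratio (b : nat -> nat) (n : nat) : R :=
  \big[Num.max/0]_(1 <= j < n.+1)
     (((b j.+1)%:R - (b j)%:R - 1) / (b n.+1)%:R).

Definition sup_liminf_gaps (b : nat -> nat -> nat) : \bar R :=
  ereal_sup [set limn_einf (fun n => (gap_ratio (b s) n)%:E) | s in [set s | (2 <= s)%N]].

End Defs.

(* Main.v *)
Require Import Defs.
From HB Require Import structures.
From mathcomp Require Import all_boot all_order all_algebra.
From mathcomp Require Import all_classical all_reals all_analysis.
From mathcomp Require Import ring lra zify.
Import Order.TTheory GRing.Theory Num.Theory.
Local Open Scope classical_set_scope.
Local Open Scope ring_scope.
Set Implicit Arguments. Unset Strict Implicit. Unset Printing Implicit Defensive.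

Section Helpers.
Variable R : realType.

Lemma floor_run (s : nat) (z : R) (N m : nat) :
  (forall n, (N < n <= N + m)%N -> digit s z n = 0) ->
  (Num.floor (z * s%:R ^+ (N + m)))%:~R = s%:R ^+ m * (Num.floor (z * s%:R ^+ N))%:~R :> R.
Proof.
elim: m => [|m IH] H; first by rewrite addn0 expr0 mul1r.
have H1 := H (N + m).+1.
have := H1 _; rewrite /digit /= => /(_ _)/eqP.
rewrite subr_eq0 => /(_ _)/eqP.
move=> E; rewrite addnS E; last by rewrite ltnS leq_addr /= addnS.
rewrite intrM IH; last by move=> n /andP[a b]; apply: H; rewrite a /= addnS (leq_trans b).
by rewrite exprS mulrA.
Qed.

End Helpers.
Section H2.
Variable R : realType.
Lemma frac_bound (s : nat) (z : R) (N g : nat) : (0 < s)%N ->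
  (forall n, (N < n <= N + g)%N -> digit s z n = 0) ->
  0 <= z * s%:R ^+ N - (Num.floor (z * s%:R ^+ N))%:~R < (s%:R ^+ g)^-1.
Proof.
move=> s0 H; have E := @floor_run R _ _ _ _ H.
have sg : 0 < s%:R ^+ g :> R by rewrite exprn_gt0 // ltr0n.
rewrite subr_ge0 floor_le /=.
have := floorD1_gt (z * s%:R ^+ (N + g)).
rewrite intrD E exprD mulrA => h.
rewrite ltrBlDl -(ltr_pM2r sg) mulrDl mulVf ?gt_eqF // mulrC [_ * s%:R ^+ g]mulrC.
by rewrite mulrC; move: h; rewrite (_ : 1%:~R = 1).
Qed.
End H2.
Lemma mono_lt (b : nat -> nat) : (forall n, (1 <= n)%N -> (b n < b n.+1)%N) ->
  forall a c, (1 <= a)%N -> (a < c)%N -> (b a < b c)%N.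
Proof.
move=> H a c a1; elim: c => // c IH; rewrite ltnS leq_eqVlt; case/orP=> [/eqP<-|ac].
  exact: H.
by rewrite (ltn_trans (IH ac)) // H // (leq_trans a1) // ltnW.
Qed.

Lemma mono_le (b : nat -> nat) : (forall n, (1 <= n)%N -> (b n < b n.+1)%N) ->
  forall a c, (1 <= a)%N -> (a <= c)%N -> (b a <= b c)%N.
Proof.
move=> H a c a1; rewrite leq_eqVlt => /orP[/eqP->//|ac].
exact: ltnW (mono_lt H a1 ac).
Qed.

Lemma mono_refl (b : nat -> nat) : (forall n, (1 <= n)%N -> (b n < b n.+1)%N) ->
  forall a c, (1 <= a)%N -> (1 <= c)%N -> (b a < b c)%N -> (a < c)%N.
Proof.
move=> H a c a1 c1 h; rewrite ltnNge; apply/negP => ca.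
by have := mono_le H c1 ca; rewrite leqNgt h.
Qed.

Lemma b_ge (b : nat -> nat) : (forall n, (1 <= n)%N -> (b n < b n.+1)%N) ->
  (1 <= b 1)%N -> forall n, (1 <= n)%N -> (n <= b n)%N.
Proof.
move=> H b1; elim=> // n IH n1.
case: n IH n1 => // n IH _.
by apply: leq_ltn_trans (IH _) (H _ _).
Qed.

Lemma gap_not_in (P : set nat) (b : nat -> nat) : increasing_enum P b ->
  forall j m, (1 <= j)%N -> (b j < m < b j.+1)%N -> ~ P m.
Proof.
move=> [H E] j m j1 /andP[l1 l2]; rewrite -E => -[n /= n1 bn].
have := mono_refl H j1 n1; rewrite bn => /(_ l1) jn.
have := mono_refl H n1 (ltn0Sn j); rewrite bn => /(_ l2).
by rewrite ltnS leqNgt jn.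
Qed.

Lemma bigmax_ex (R : realType) (f : nat -> R) (n : nat) (nu : R) : 0 <= nu ->
  nu < \big[Num.max/0]_(1 <= j < n.+1) f j ->
  exists j, (1 <= j <= n)%N /\ nu < f j.
Proof.
move=> nu0 h; apply: contrapT => hn; move: h; apply/negP; rewrite -leNgt.
rewrite big_seq; apply: (big_ind (fun x => x <= nu)) => //.
  by move=> x y hx hy; rewrite ge_max hx hy.
move=> j; rewrite mem_index_iota ltnS => hj; rewrite leNgt; apply/negP => hj2.
by apply: hn; exists j.
Qed.
Section H3.
Variable R : realType.
Local Open Scope ereal_scope.

Lemma liminf_ev (u : (\bar R)^nat) (nu : R) : nu%:E < limn_einf u ->
  exists n0, forall n, (n0 <= n)%N -> nu%:E < u n.
Proof.
rewrite /limn_einf -/(limf_einf u \oo) limf_einfE => /ereal_sup_gt[_ [V hV <-]].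
case: hV => N _ hN h; exists N => n Nn.
apply: (lt_le_trans h); apply: ereal_inf_lbound; exists n => //; exact: hN.
Qed.

Lemma le_approx_e (x y : \bar R) : (forall r : R, r%:E < x -> r%:E <= y) -> x <= y.
Proof.
move=> H; case: x H => [a| |] H; last by rewrite leNye.
- case: y H => [c| |] H; last 2 first.
  + by rewrite leey.
  + by have := H (a - 1)%R; rewrite lte_fin ltrBlDr ltrDl ltr01 leeNy_eq => /(_ isT).
  rewrite lee_fin leNgt; apply/negP => ca.
  have := H ((c + a) / 2)%R; rewrite !lte_fin lee_fin (midf_lt ca).2 => /(_ isT).
  by rewrite leNgt (midf_lt ca).1.
- case: y H => [c| |] H; last 2 first.
  + by rewrite leey.
  + by have := H 0%R; rewrite ltry leeNy_eq => /(_ isT).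
  by have := H (c + 1)%R; rewrite ltry lee_fin => /(_ isT) h; exfalso; lra.
Qed.

Lemma omega_lb (k : nat) (zeta : 'I_k -> R) (nu : R) (M : R) :
  (forall X, (M < X)%R -> admissible_nu zeta X nu) -> nu%:E <= omega_hat zeta.
Proof.
move=> H; rewrite /omega_hat limf_einfE.
apply: le_trans (ereal_sup_ubound _); last first.
  exists [set X | (M < X)%R] => //; exists M; split => //; exact: num_real.
apply/ereal_infP => _ [X /= MX <-].
by apply: ereal_sup_ubound; exists nu => //; exact: H.
Qed.
End H3.
Section Main.
Variable R : realType.

Lemma main_approx (k : nat) (z : 'I_k -> R) (s : nat) (b : nat -> nat) (nu : R) (n0 : nat) :
  (2 <= s)%N -> increasing_enum (nonzero_positions z s) b -> 0 < nu ->
  (forall n, (n0 <= n)%N -> nu < gap_ratio R b n) ->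
  forall X, (s ^ b n0.+1)%:R <= X ->
  exists N : nat, (s ^ N)%:R <= X /\
    forall i, `|z i * (s ^ N)%:R - (Num.floor (z i * (s ^ N)%:R))%:~R| <= X `^ (- nu).
Proof.
move=> s2 Henum nu0 Hg X HX.
have [Hm HE] := Henum.
have b1 : (1 <= b 1)%N.
  have : nonzero_positions z s (b 1) by rewrite -HE; exists 1.
  by case.
have bge := b_ge Hm b1.
have s1 : (1 < s)%N by [].
have s0 : (0 < s)%N by apply: ltn_trans s1.
have X0 : 0 < X by apply: lt_le_trans HX; rewrite ltr0n expn_gt0 s0.
have ex : exists n, X < (s ^ b n.+1)%:R.
  exists (Num.truncn X); apply: lt_le_trans (truncnS_gt X) _.
  rewrite ler_nat; exact: leq_trans (bge (Num.truncn X).+1 isT) (ltnW (ltn_expl _ s1)).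
case: (ex_minnP ex) => n Pn minn.
have n0n : (n0 < n)%N.
  have : (s ^ b n0.+1 < s ^ b n.+1)%N by rewrite -(ltr_nat R); apply: le_lt_trans HX Pn.
  rewrite ltn_exp2l // => h; have := mono_refl Hm (ltn0Sn n0) (ltn0Sn n) h; by rewrite ltnS.
case: n Pn minn n0n => // n' Pn minn n0n.
have Xge : (s ^ b n'.+1)%:R <= X.
  rewrite leNgt; apply/negP => h; have := minn _ h; by rewrite ltnn.
have [j [/andP[j1 jn] hj]] := bigmax_ex (ltW nu0) (Hg _ (ltnW n0n)).
set n := n'.+1 in Pn jn hj.
have bn0 : (0 < (b n.+1)%:R :> R) by rewrite ltr0n (leq_trans (ltn0Sn n) (bge n.+1 (ltn0Sn n))).
have bjlt : (b j < b j.+1)%N by apply: Hm.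
set g := (b j.+1 - (b j).+1)%N.
have gE : (g%:R : R) = (b j.+1)%:R - (b j)%:R - 1.
  by rewrite /g natrB // -[(b j).+1]addn1 natrD; lra.
have Hnu : nu * (b n.+1)%:R < g%:R by rewrite gE -ltr_pdivlMr.
have Hdig : forall i m, (b j < m <= b j + g)%N -> digit s (z i) m = 0.
  move=> i m /andP[m1 m2]; apply: contrapT => hd.
  apply: (gap_not_in Henum j1 (m := m)).
    rewrite m1 /=; apply: leq_ltn_trans m2 _; rewrite /g; lia.
  by split; [exact: leq_ltn_trans m1 | exists i; apply/eqP].
exists (b j); split.
  apply: le_trans Xge; rewrite ler_nat leq_exp2l //; apply: (mono_le Hm j1); exact: jn.
move=> i.
have /andP[f0 f1] := frac_bound s0 (Hdig i).
rewrite natrX (ger0_norm f0); apply: (le_trans (ltW f1)).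
have sR : 1 < s%:R :> R by rewrite ltr1n.
have sgp : 0 < s%:R ^+ g :> R by rewrite exprn_gt0 // (lt_trans ltr01).
have lns : 0 < ln (s%:R : R) by apply: ln_gt0.
have lnX : ln X < (b n.+1)%:R * ln (s%:R : R).
  have P0 : 0 < (s ^ b n.+1)%:R :> R by rewrite ltr0n expn_gt0 s0.
  rewrite mulr_natl -lnXn ?(lt_trans ltr01) // -natrX.
  by rewrite ltr_ln ?posrE.
rewrite /powR gt_eqF // -[s%:R ^+ g]lnK ?posrE // -expRN ler_expR lnXn ?(lt_trans ltr01) //.
rewrite -[ln (s%:R : R) *+ g]mulr_natl.
have h1 : nu * ln X <= nu * ((b n.+1)%:R * ln (s%:R : R)) by rewrite ler_pM2l // ltW.
have h2 : nu * (b n.+1)%:R * ln (s%:R : R) <= g%:R * ln (s%:R : R) by rewrite ler_pM2r // ltW.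
rewrite mulrA in h1; lra.
Qed.
End Main.
Section Final.
Variable R : realType.
Local Open Scope ereal_scope.

Lemma omega_ge0 (k : nat) (zeta : 'I_k -> R) : (forall i, (0 < zeta i < 1)%R) ->
  0 <= omega_hat zeta.
Proof.
move=> hz; apply: (@omega_lb _ _ _ 0%R 1%R) => X X1.
exists 1%:Z, (fun _ => 0%:Z); split; first by left.
split; first by rewrite normr1 ltW.
move=> i; have e0 : (0%Z)%:~R = 0%R :> R by []. have e1 : (1%Z)%:~R = 1%R :> R by [].
rewrite e0 e1 oppr0 powRr0 mulr1 addr0.
by have /andP[a b] := hz i; rewrite ger0_norm ?ltW.
Qed.

Lemma part (k : nat) (zeta zz : 'I_k -> R) (bb : nat -> nat -> nat) :
  (forall i, (0 < zeta i < 1)%R) ->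
  (forall s, (2 <= s)%N -> increasing_enum (nonzero_positions zz s) (bb s)) ->
  (forall (X nu : R) (x : nat), (x%:R <= X)%R -> (0 < x)%N ->
     (forall i, (`|zz i * x%:R - (Num.floor (zz i * x%:R))%:~R| <= X `^ (- nu))%R) ->
     admissible_nu zeta X nu) ->
  sup_liminf_gaps R bb <= omega_hat zeta.
Proof.
move=> hz hb htr; apply: ge_ereal_sup => _ [s /= s2 <-].
apply: le_approx_e => r hr.
have [r0|r0] := lerP r 0%R.
  by apply: le_trans (omega_ge0 hz); rewrite lee_fin.
have [n0 hn0] := liminf_ev hr.
apply: (@omega_lb _ _ _ _ (s ^ bb s n0.+1)%:R) => X hX.
have [N [hN hi]] := main_approx s2 (hb s s2) r0 (fun n h => (hn0 n h)) (ltW hX).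
apply: (htr _ _ (s ^ N)%N hN) => //.
by rewrite expn_gt0 (ltn_trans _ s2).
Qed.
End Final.

Theorem proposition2p3 (R : realType) (k : nat) (zeta : 'I_k -> R)
  (b b' : nat -> nat -> nat) :
  (0 < k)%N ->
  (forall i, 0 < zeta i < 1) ->
  Q_lin_indep zeta ->
  (forall s, (2 <= s)%N -> increasing_enum (nonzero_positions zeta s) (b s)) ->
  (forall s, (2 <= s)%N ->
     increasing_enum (nonzero_positions (fun i => 1 - zeta i) s) (b' s)) ->
  (maxe (sup_liminf_gaps R b) (sup_liminf_gaps R b') <= omega_hat zeta)%E.
Proof.
move=> _ hz _ hb hb'; rewrite ge_max; apply/andP; split.
- apply: part hz hb _ => X nu x hx x0 hi.
  exists x%:Z, (fun i => Num.floor (zeta i * x%:R)); split.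
    by left; rewrite eqz_nat -lt0n.
  split; first by rewrite ger0_norm.
  exact: hi.
- apply: part hz hb' _ => X nu x hx x0 hi.
  exists x%:Z, (fun i => x%:Z - Num.floor ((1 - zeta i) * x%:R)); split.
    by left; rewrite eqz_nat -lt0n.
  split; first by rewrite ger0_norm.
  move=> i; rewrite intrB -normrN.
  have -> : - (zeta i * (x%:Z)%:~R - ((x%:Z)%:~R - (Num.floor ((1 - zeta i) * x%:R))%:~R))
     = (1 - zeta i) * x%:R - (Num.floor ((1 - zeta i) * x%:R))%:~R.
    rewrite [(x%:Z)%:~R]/=; ring.
  exact: hi.
Qed.
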